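(* Let $N\ge3$ be an integer, $(N+2)/(N-2)<p<p_{JL}$ and $\lambda>0$, and let $u_*$ be the unique radial singular solution of $u''+\frac{N-1}{r}u'+\lambda u+|u|^{p-1}u=0$. Then there exists $r_*>0$ such that $u_*(r_* )=0$ and $u_*(r)>0$ for $0<r<r_*$.
   Context: It is known (Merle–Peletier) that the equation has a unique solution $u_*$ near $r=0$ satisfying $u_*(r)=A r^{-2/(p-1)}(1+o(1))$ as $r\to0^+$, where $A=\left[\frac{2}{p-1}\left(N-2-\frac{2}{p-1}\right)\right]^{1/(p-1)}$; it is called the singular solution. The Joseph–Lundgren exponent is $p_{JL}=1+\frac{4}{N-4-2\sqrt{N-1}}$ for $N\ge11$ and $p_{JL}=\infty$ for $3\le N\le10$. *)

(* Defs.v *)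
From Stdlib Require Import Reals Lra.
From Coquelicot Require Import Coquelicot.
Open Scope R_scope.

(* Nonlinearity |s|^(p-1) s.  (Rpower 0 _ = 1 in Stdlib, but the factor s
   makes the value 0 at s = 0, which is the correct value.) *)
Definition nonlin (p s : R) : R := Rpower (Rabs s) (p - 1) * s.

Definition A_const (N : nat) (p : R) : R :=
  Rpower (2 / (p - 1) * (INR N - 2 - 2 / (p - 1))) (1 / (p - 1)).

(* p < p_JL, with p_JL = 1 + 4/(N-4-2 sqrt(N-1)) for N >= 11 and +oo for 3 <= N <= 10. *)
Definition below_pJL (N : nat) (p : R) : Prop :=
  (N <= 10)%nat \/ p < 1 + 4 / (INR N - 4 - 2 * sqrt (INR N - 1)).

Definition radial_solution (N : nat) (p lambda : R) (u du : R -> R) : Prop :=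
  (forall r, 0 < r -> is_derive u r (du r)) /\
  (forall r, 0 < r -> ex_derive du r) /\
  (forall r, 0 < r ->
     Derive du r + (INR N - 1) / r * du r + lambda * u r + nonlin p (u r) = 0).

(* Singular behaviour: u(r) = A r^{-2/(p-1)} (1 + o(1)) as r -> 0+,
   i.e. r^{2/(p-1)} u(r) -> A (A > 0). *)
Definition singular_at_0 (N : nat) (p : R) (u : R -> R) : Prop :=
  filterlim (fun r => Rpower r (2 / (p - 1)) * u r) (at_right 0)
            (locally (A_const N p)).

(* Main.v *)
Require Import Defs.
From Stdlib Require Import Reals Lra Classical.
From Coquelicot Require Import Coquelicot.
Open Scope R_scope.
Lemma Dmul (f g : R -> R) x df dg : is_derive f x df -> is_derive g x dg ->
  is_derive (fun y => f y * g y) x (df * g x + f x * dg).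
Proof. intros H1 H2. apply (is_derive_mult f g x df dg H1 H2). intros; apply Rmult_comm. Qed.
Lemma Dplus (f g : R -> R) x df dg : is_derive f x df -> is_derive g x dg ->
  is_derive (fun y => f y + g y) x (df + dg).
Proof. intros H1 H2. apply (is_derive_plus f g x df dg H1 H2). Qed.
Lemma Dminus (f g : R -> R) x df dg : is_derive f x df -> is_derive g x dg ->
  is_derive (fun y => f y - g y) x (df - dg).
Proof. intros H1 H2. apply (is_derive_minus f g x df dg H1 H2). Qed.
Lemma Dval (f : R -> R) x l l' : is_derive f x l -> l = l' -> is_derive f x l'.
Proof. intros H ->; exact H. Qed.
Lemma Dpow x y : 0 < x -> is_derive (fun t => Rpower t y) x (y * Rpower x (y - 1)).
Proof. intros; apply is_derive_Reals, derivable_pt_lim_power; auto. Qed.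
Lemma Dsin k a x : is_derive (fun t => sin (k * (t - a))) x (k * cos (k * (x - a))).
Proof. auto_derive. all: try exact I. unfold Rminus; ring. Qed.
Lemma Dcos k a x : is_derive (fun t => k * cos (k * (t - a))) x (- (k * k) * sin (k * (x - a))).
Proof. auto_derive. all: try exact I. unfold Rminus; ring. Qed.
Lemma Rpower_m1 r y : 0 < r -> Rpower r (y - 1) = Rpower r y / r.
Proof. intros. assert (E: Rpower r y = Rpower r (y - 1) * Rpower r 1).
  { rewrite <- Rpower_plus. f_equal; ring. }
  rewrite E, Rpower_1 by auto. field; lra. Qed.


Lemma Rpower_pos' r y : 0 < Rpower r y.
Proof. unfold Rpower; apply exp_pos. Qed.

Lemma nonlin_pos p s : 0 < s -> 0 < nonlin p s.
Proof. intros; unfold nonlin. apply Rmult_lt_0_compat; auto using Rpower_pos'. Qed.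

Lemma le0m x y : 0 <= x -> y <= 0 -> x * y <= 0.
Proof. intros; nra. Qed.

Lemma no_pos (N : nat) (p lambda : R) (u du : R -> R) :
  (3 <= N)%nat -> 0 < lambda -> radial_solution N p lambda u du ->
  (forall r, 0 < r -> 0 < u r) -> False.
Proof.
  intros HN Hl [Hu [Hdu Hode]] Hpos.
  assert (HN3 : 3 <= INR N) by (replace 3 with (INR 3) by (simpl; ring); apply le_INR; auto).
  set (m := (INR N - 1) / 2).
  assert (Hm : 1 <= m) by (unfold m; lra).
  set (k := sqrt (lambda / 2)).
  assert (Hk : 0 < k) by (apply sqrt_lt_R0; lra).
  assert (Hkk : k * k = lambda / 2) by (apply sqrt_sqrt; lra).
  set (a := 1 + 2 * (m * (m - 1)) / lambda).
  assert (Hmm : 0 <= m * (m - 1)) by nra.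
  assert (Ha : 1 <= a).
  { unfold a. assert (0 <= 2 * (m * (m - 1)) / lambda) by (apply Rdiv_le_0_compat; lra). lra. }
  set (b := a + PI / k).
  assert (HPk : 0 < PI / k) by (apply Rdiv_lt_0_compat; [apply PI_RGT_0 | exact Hk]).
  assert (Hab : a < b) by (unfold b; lra).
  set (W := fun r => (m * Rpower r (m - 1) * u r + Rpower r m * du r) * sin (k * (r - a))
                      - Rpower r m * u r * (k * cos (k * (r - a)))).
  set (dW := fun r => Rpower r m * (u r * sin (k * (r - a)) * (m * (m - 1) / (r * r) + k * k - lambda)
                      - nonlin p (u r) * sin (k * (r - a)))).
  assert (HD : forall r, 0 < r -> is_derive W r (dW r)).
  { intros r Hr.
    assert (HP1 := Dpow r (m - 1) Hr).
    assert (HP := Dpow r m Hr).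
    assert (HmP := is_derive_scal _ r m _ HP1).
    assert (Hur := Hu r Hr).
    assert (Hdur := Derive_correct _ _ (Hdu r Hr)).
    assert (HS := Dsin k a r). assert (HC := Dcos k a r).
    eapply Dval.
    { unfold W. apply Dminus; apply Dmul. 
      - apply Dplus; apply Dmul; [exact HmP|exact Hur|exact HP|exact Hdur].
      - exact HS.
      - apply Dmul; [exact HP|exact Hur].
      - exact HC. }
    assert (Eo := Hode r Hr).
    replace (Derive du r) with (- ((INR N - 1) / r * du r + lambda * u r + nonlin p (u r))) by lra.
    unfold dW. rewrite (Rpower_m1 r (m - 1)) by lra. rewrite !(Rpower_m1 r m) by lra.
    unfold m. match goal with |- @eq _ ?A ?B => change (@eq R A B) end. field. lra. }
  assert (Hc : forall r, 0 < r -> continuity_pt W r).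
  { intros r Hr. apply derivable_continuous_pt. exists (dW r).
    apply is_derive_Reals, HD; auto. }
  destruct (MVT_gen W a b dW) as [c [Hc1 Hc2]].
  { rewrite Rmin_left, Rmax_right by lra. intros x Hx; apply HD; lra. }
  { rewrite Rmin_left, Rmax_right by lra. intros x Hx; apply Hc; lra. }
  rewrite Rmin_left, Rmax_right in Hc1 by lra.
  assert (Wa : W a = - (Rpower a m * u a * k)).
  { unfold W. replace (k * (a - a)) with 0 by ring. rewrite sin_0, cos_0. ring. }
  assert (Wb : W b = Rpower b m * u b * k).
  { unfold W. replace (k * (b - a)) with PI by (unfold b; field; lra). rewrite sin_PI, cos_PI. ring. }
  assert (HWa : 0 < Rpower a m * u a * k).
  { apply Rmult_lt_0_compat; [apply Rmult_lt_0_compat|]; auto using Rpower_pos'; apply Hpos; lra. }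
  assert (HWb : 0 < Rpower b m * u b * k).
  { apply Rmult_lt_0_compat; [apply Rmult_lt_0_compat|]; auto using Rpower_pos'; apply Hpos; lra. }
  assert (Hs : 0 <= sin (k * (c - a))).
  { apply sin_ge_0. apply Rmult_le_pos; lra.
    apply Rle_trans with (k * (b - a)). apply Rmult_le_compat_l; lra.
    unfold b; right; field; lra. }
  assert (Hq : m * (m - 1) / (c * c) + k * k - lambda <= 0).
  { assert (m * (m - 1) / (c * c) <= lambda / 2).
    { apply Rmult_le_reg_r with (c * c). nra.
      unfold Rdiv at 1. rewrite Rmult_assoc, Rinv_l, Rmult_1_r by nra.
      assert (Hca : a <= c) by lra.
      assert (a <= c * c) by nra.
      assert (2 * (m * (m - 1)) / lambda * lambda = 2 * (m * (m-1))) by (field; lra).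
      unfold a in *. nra. }
    lra. }
  assert (Hnl : 0 < nonlin p (u c)) by (apply nonlin_pos, Hpos; lra).
  assert (HdW : dW c <= 0).
  { unfold dW. assert (0 < Rpower c m) by apply Rpower_pos'.
    assert (0 < u c) by (apply Hpos; lra).
    assert (u c * sin (k * (c - a)) * (m * (m - 1) / (c * c) + k * k - lambda) <= 0).
    { apply le0m; [apply Rmult_le_pos; lra | lra]. }
    assert (0 <= nonlin p (u c) * sin (k * (c - a))) by (apply Rmult_le_pos; lra).
    apply le0m; lra. }
  assert (dW c * (b - a) <= 0) by (rewrite Rmult_comm; apply le0m; lra).
  lra.
Qed.

Lemma test (N : nat) (p : R) u : singular_at_0 N p u -> exists d, 0 < d /\ forall r, 0 < r < d -> 0 < u r.
Proof.
  intros H. unfold singular_at_0 in H.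
  assert (HA : 0 < A_const N p) by (unfold A_const, Rpower; apply exp_pos).
  assert (HA2 : 0 < A_const N p / 2) by lra.
  apply filterlim_locally with (eps := mkposreal _ HA2) in H.
  destruct H as [d Hd]. exists d. split. apply cond_pos.
  intros r [Hr1 Hr2]. specialize (Hd r).
  assert (B : ball 0 d r).
  { unfold ball; simpl; unfold AbsRing_ball, abs, minus, plus, opp; simpl. rewrite Rabs_right; lra. }
  specialize (Hd B Hr1). revert Hd.
  unfold ball; simpl; unfold AbsRing_ball, abs, minus, plus, opp; simpl. intros Hd.
  apply Rabs_def2 in Hd. destruct Hd as [H1 H2].
  assert (Hp : 0 < Rpower r (2 / (p - 1))) by (unfold Rpower; apply exp_pos).
  assert (0 < Rpower r (2 / (p - 1)) * u r) by lra.
  destruct (Rlt_or_le 0 (u r)); auto. nra.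
Qed.

Lemma first_zero (u : R -> R) (du : R -> R) d b :
  (forall r, 0 < r -> is_derive u r (du r)) ->
  0 < d -> (forall r, 0 < r < d -> 0 < u r) -> 0 < b -> u b <= 0 ->
  exists rs : R, 0 < rs /\ u rs = 0 /\ (forall r, 0 < r < rs -> 0 < u r).
Proof.
  intros Hu Hd Hpos Hb Hub.
  set (E := fun x => 0 < x /\ forall y, 0 < y <= x -> 0 < u y).
  assert (HEb : forall x, E x -> x < b).
  { intros x [Hx1 Hx2]. destruct (Rlt_or_le x b); auto.
    assert (0 < u b) by (apply Hx2; lra). lra. }
  assert (HE2 : E (d / 2)).
  { split. lra. intros y Hy. apply Hpos; lra. }
  destruct (completeness E) as [rs [Hub1 Hlub]].
  { exists b. intros x Hx. left; auto. }
  { exists (d / 2); auto. }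
  assert (Hrs1 : d / 2 <= rs) by (apply Hub1; auto).
  assert (Hrs2 : rs <= b) by (apply Hlub; intros x Hx; left; auto).
  assert (Hbelow : forall r, 0 < r < rs -> 0 < u r).
  { intros r Hr. destruct (classic (exists x, E x /\ r < x)) as [[x [[Ex1 Ex2] Ex3]]|Hn].
    - apply Ex2; lra.
    - assert (rs <= r).
      { apply Hlub. intros x Hx. destruct (Rle_or_lt x r); auto.
        exfalso; apply Hn; exists x; auto. }
      lra. }
  exists rs. split; [lra|]. split; [|exact Hbelow].
  assert (Hc : continuity_pt u rs).
  { apply derivable_continuous_pt. exists (du rs). apply is_derive_Reals, Hu; lra. }
  destruct (Rtotal_order (u rs) 0) as [Hneg|[Hz|Hposr]]; auto; exfalso.
  - destruct (Hc (- u rs)) as [al [Hal Hal2]]; [lra|].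
    set (y := Rmax (rs / 2) (rs - al / 2)).
    assert (Hy1 : rs / 2 <= y) by apply Rmax_l.
    assert (Hy2 : rs - al / 2 <= y) by apply Rmax_r.
    assert (Hy3 : y < rs) by (unfold y; apply Rmax_lub_lt; lra).
    assert (0 < u y) by (apply Hbelow; lra).
    specialize (Hal2 y). simpl in Hal2. unfold R_dist in Hal2.
    assert (Rabs (u y - u rs) < - u rs).
    { apply Hal2. split; [split; [exact I| intro; lra]|]. simpl; unfold R_dist. rewrite Rabs_left; lra. }
    apply Rabs_def2 in H0. lra.
  - destruct (Hc (u rs)) as [al [Hal Hal2]]; [lra|].
    assert (E (rs + al / 2)).
    { split. lra. intros y Hy.
      destruct (Rtotal_order y rs) as [H1|[H1|H1]].
      - apply Hbelow; lra.
      - subst; auto.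
      - specialize (Hal2 y). simpl in Hal2. unfold R_dist in Hal2.
        assert (Rabs (u y - u rs) < u rs).
        { apply Hal2. split; [split; [exact I| intro; lra]|]. simpl; unfold R_dist. rewrite Rabs_right; lra. }
        apply Rabs_def2 in H. lra. }
    assert (rs + al / 2 <= rs) by (apply Hub1; auto). lra.
Qed.

Theorem proposition3p2 (N : nat) (p lambda : R) (u du : R -> R) :
  (3 <= N)%nat ->
  (INR N + 2) / (INR N - 2) < p ->
  below_pJL N p ->
  0 < lambda ->
  radial_solution N p lambda u du ->
  singular_at_0 N p u ->
  exists rs : R, 0 < rs /\ u rs = 0 /\ (forall r, 0 < r < rs -> 0 < u r).
Proof.
  intros HN _ _ Hl Hsol Hsing.
  destruct (test N p u Hsing) as [d [Hd Hpos]].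
  destruct (classic (exists b, 0 < b /\ u b <= 0)) as [[b [Hb Hub]]|Hn].
  - destruct Hsol as [Hu _]. exact (first_zero u du d b Hu Hd Hpos Hb Hub).
  - exfalso. apply (no_pos N p lambda u du HN Hl Hsol).
    intros r Hr. destruct (Rlt_or_le 0 (u r)); auto.
    exfalso; apply Hn; exists r; auto.
Qed.
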